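(* Let $q$ be a prime power, $l\ge1$, $t=q^l$, and let $i$ be an integer with $1\le i<q-1$. Let $G_1(x)=x^{t-1}+1$, $G_2(x)=x^t+x$, and $L_1^*=\{\alpha\in GF(t^2):\ \alpha\neq0,\ G_1(\alpha)\ne0\}=\{\alpha_1,\dots,\alpha_{n}\}$. Let $H_1^{*(i)}$ be the $i(t-1)\times n$ matrix with entries $\alpha_k^s/G_1(\alpha_k)^i$ ($s=0,\dots,i(t-1)-1$, $k=1,\dots,n$). Then the matrix obtained by placing the row $\big(1/G_2(\alpha_1)^i,\dots,1/G_2(\alpha_n)^i\big)$ on top of $H_1^{*(i)}$ is a parity-check matrix of $\Gamma_2^{(i)}=\Gamma(L_1^*,G_2^i)$; that is, $\Gamma_2^{(i)}=\{c\in\Gamma_1^{*(i)}:\ \sum_{k}c_k/G_2(\alpha_k)^i=0\}$ where $\Gamma_1^{*(i)}=\Gamma(L_1^*,G_1^i)$, and the entries $1/G_2(\alpha_k)^i$ all lie in $GF(t)$.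
   Context: For a set $L=\{\alpha_1,\dots,\alpha_n\}$ of distinct elements of $GF(t^2)$ and $P\in GF(t^2)[x]$ with $P(\alpha_k)\neq0$ for all $k$, the $q$-ary Goppa code is $\Gamma(L,P)=\{c\in GF(q)^n:\ \sum_k c_k\alpha_k^s/P(\alpha_k)=0 \text{ for } s=0,\dots,\deg P-1\}$. A matrix $H$ over $GF(t^2)$ is a parity-check matrix of a $q$-ary code $C$ if $C=\{c\in GF(q)^n: cH^T=0\}$. *)

(* Defs.v *)
From HB Require Import structures.
From mathcomp Require Import all_boot all_order all_algebra all_field.
Set Implicit Arguments. Unset Strict Implicit. Unset Printing Implicit Defensive.
Import GRing.Theory.
Local Open Scope ring_scope.

(* GF(q) inside a finite field F is the set of roots of x^q - x. *)
Definition in_GF (F : fieldType) (q : nat) (x : F) : bool := x ^+ q == x.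

Definition goppa_code (F : fieldType) (q : nat) (L : seq F) (P : {poly F})
  (c : 'rV[F]_(size L)) : bool :=
  [forall j, in_GF q (c 0 j)] &&
  [forall s : 'I_(size P).-1,
      \sum_(k < size L) c 0 k * L`_k ^+ s / P.[L`_k] == 0].

Definition parity_check (F : fieldType) (q m n : nat) (H : 'M[F]_(m, n))
  (C : pred 'rV[F]_n) : Prop :=
  forall c : 'rV[F]_n, C c = [forall j, in_GF q (c 0 j)] && (c *m H^T == 0).

Definition prime_power (q : nat) : Prop :=
  exists p k : nat, [/\ prime p, (0 < k)%N & q = (p ^ k)%N].

Definition G1 (F : fieldType) (t : nat) : {poly F} := 'X^(t.-1) + 1.
Definition G2 (F : fieldType) (t : nat) : {poly F} := 'X^t + 'X.

(* L_1^* = {alpha in GF(t^2) : alpha <> 0, G1(alpha) <> 0}, listed in the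
   (fixed) enumeration order of F. *)
Definition L1star (F : finFieldType) (t : nat) : seq F :=
  [seq a <- enum F | (a != 0) && ((G1 F t).[a] != 0)].

Definition H1star (F : finFieldType) (t i : nat) :
  'M[F]_((i * t.-1)%N, size (L1star F t)) :=
  \matrix_(s, k) ((L1star F t)`_k ^+ s / (G1 F t).[(L1star F t)`_k] ^+ i).

Definition G2row (F : finFieldType) (t i : nat) : 'rV[F]_(size (L1star F t)) :=
  \row_k ((G2 F t).[(L1star F t)`_k] ^+ i)^-1.

Definition H2 (F : finFieldType) (t i : nat) :
  'M[F]_(1 + i * t.-1, size (L1star F t)) :=
  col_mx (G2row F t i) (H1star F t i).

Arguments goppa_code {F} q L P c.
Arguments parity_check {F} q {m n} H C.

(* Main.v *)
Require Import Defs.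
From HB Require Import structures.
From mathcomp Require Import all_boot all_order all_algebra all_field.
From mathcomp Require Import zify ring.
Import GRing.Theory.
Local Open Scope ring_scope.

Lemma goppaP (F : fieldType) q (L : seq F) (P : {poly F}) (c : 'rV[F]_(size L)) :
  reflect ((forall j, in_GF q (c 0 j)) /\
    (forall s, (s < (size P).-1)%N ->
       \sum_(k < size L) c 0 k * L`_k ^+ s / P.[L`_k] == 0))
    (goppa_code q L P c).
Proof.
apply: (iffP andP) => [[/forallP h1 /forallP h2]|[h1 h2]]; split => //.
- by move=> s sN; exact: (h2 (Ordinal sN)).
- by apply/forallP.
- by apply/forallP => s; exact: h2.
Qed.

Theorem lemma4 (F : finFieldType) (q l t i : nat) :
  prime_power q -> (1 <= l)%N -> t = (q ^ l)%N -> #|F| = (t ^ 2)%N ->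
  (1 <= i)%N -> (i < q - 1)%N ->
  [/\ parity_check q (H2 F t i)
        (goppa_code q (L1star F t) (G2 F t ^+ i)),
      (forall c : 'rV[F]_(size (L1star F t)),
         goppa_code q (L1star F t) (G2 F t ^+ i) c =
         goppa_code q (L1star F t) (G1 F t ^+ i) c &&
         (\sum_(k < size (L1star F t))
             c 0 k / (G2 F t).[(L1star F t)`_k] ^+ i == 0))
    & (forall k : 'I_(size (L1star F t)),
         in_GF t (((G2 F t).[(L1star F t)`_k] ^+ i)^-1))].
Proof.
move=> [p [k [pp k0 hq]]] l1 ht cardF i1 iq.
have q2 : (1 < q)%N.
  by rewrite hq (leq_trans (prime_gt1 pp)) // -{1}(expn1 p) leq_pexp2l // prime_gt0.
have tq : (q <= t)%N by rewrite ht -{1}(expn1 q) leq_pexp2l // ltnW.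
have t1 : (1 < t)%N by lia.
have it : (i < t)%N by lia.
have pc : p \in [pchar F].
  apply: (card_finPcharP (n := (k * l * 2)%N)) => //.
  by rewrite cardF ht hq -!expnM mulnA.
have frobD (x y : F) : (x + y) ^+ t = x ^+ t + y ^+ t.
  by apply: exprDn_pchar; rewrite ht hq -expnM pnatX pnatE // pc.
have frob_sum n (f : 'I_n -> F) : (\sum_(j < n) f j) ^+ t = \sum_(j < n) f j ^+ t.
  apply: (big_morph (fun x : F => x ^+ t)) => //; apply/eqP; rewrite expf_eq0 eqxx andbT; lia.
have ftt (x : F) : x ^+ (t * t) = x by rewrite mulnn -cardF expf_card.
have cq (x : F) : in_GF q x -> x ^+ t = x.
  move=> /eqP hx; rewrite ht; elim: (l) => [|m ih]; first by rewrite expn0 expr1.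
  by rewrite expnSr exprM ih.
set L := L1star F t.
have memL (j : nat) : (j < size L)%N -> L`_j != 0 /\ (G1 F t).[L`_j] != 0.
  move=> /(mem_nth 0); rewrite mem_filter => /andP [/andP [h1 h2] _]; split=> //.
have hG1 (a : F) : (G1 F t).[a] = a ^+ t.-1 + 1 by rewrite /G1 !hornerE.
have hG2 (a : F) : (G2 F t).[a] = a * (G1 F t).[a].
  by rewrite /G2 hG1 !hornerE mulrDr mulr1 -exprS prednK //; lia.
have sG1 : (size (G1 F t ^+ i)).-1 = (i * t.-1)%N.
  rewrite size_exp /G1 -polyC1 size_XnaddC /=; lia.
have sG2 : (size (G2 F t ^+ i)).-1 = (i * t)%N.
  rewrite size_exp /G2 size_polyDl ?size_polyXn ?size_polyX /=; lia.
have g1t (a : F) : a != 0 -> a ^+ t.-1 * (G1 F t).[a] ^+ t = (G1 F t).[a].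
  move=> a0; rewrite hG1 frobD expr1n -exprM mulrDr mulr1 -exprD.
  have -> : (t.-1 + t.-1 * t = t * t - 1)%N by nia.
  rewrite addrC; congr (_ + _); apply: (mulIf a0); rewrite mul1r -exprSr.
  have -> : (t * t - 1).+1 = (t * t)%N by nia.
  exact: ftt.
have G2t (a : F) : (G2 F t).[a] ^+ t = (G2 F t).[a].
  by rewrite /G2 !hornerE frobD -exprM ftt addrC.
have shift (a c : F) s : a != 0 -> (G1 F t).[a] != 0 ->
    c * a ^+ (s + i) / (G2 F t ^+ i).[a] = c * a ^+ s / (G1 F t ^+ i).[a].
  move=> a0 g0; rewrite !horner_exp hG2 exprMn exprD.
  by field; rewrite ?expf_neq0 ?mulf_neq0.
have frobterm (a c : F) s : a != 0 -> (G1 F t).[a] != 0 -> (i <= s * t)%N ->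
    c ^+ t = c ->
    (c * a ^+ s / (G2 F t ^+ i).[a]) ^+ t = c * a ^+ (s * t - i) / (G1 F t ^+ i).[a].
  move=> a0 g0 ist ct; rewrite !horner_exp hG2.
  have e : (G1 F t).[a] ^+ i = a ^+ (i * t.-1) * (G1 F t).[a] ^+ (i * t).
    by rewrite -{1}(g1t a a0) exprMn -!exprM mulnC [(t * i)%N]mulnC.
  rewrite [in RHS]e exprMn [(c * _) ^+ t]exprMn exprVn -!exprM exprMn ct.
  rewrite (_ : a ^+ (s * t) = a ^+ (s * t - i) * a ^+ i); last first.
    by rewrite -exprD subnK.
  rewrite (_ : a ^+ (i * t) = a ^+ i * a ^+ (i * t.-1)); last first.
    by rewrite -exprD; congr (_ ^+ _); nia.
  by field; rewrite ?expf_neq0 ?mulf_neq0.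
have C3 : forall k : 'I_(size L), in_GF t (((G2 F t).[L`_k] ^+ i)^-1).
  by move=> j; rewrite /in_GF exprVn -exprM mulnC exprM G2t.
have C2 : forall c : 'rV[F]_(size L),
    goppa_code q L (G2 F t ^+ i) c =
    goppa_code q L (G1 F t ^+ i) c &&
    (\sum_(k < size L) c 0 k / (G2 F t).[L`_k] ^+ i == 0).
  move=> c; apply/idP/idP.
  - case/goppaP => hc; rewrite sG2 => h2; apply/andP; split.
    + apply/goppaP; split => // s; rewrite sG1 => hs.
      have hs' : (s + i < i * t)%N by nia.
      rewrite -[X in _ == X](eqP (h2 _ hs')); apply/eqP; apply: eq_bigr => j _.
      by have [a0 g0] := memL j (ltn_ord j); rewrite shift.
    + have h0 : (0 < i * t)%N by nia.
      rewrite -[X in _ == X](eqP (h2 _ h0)); apply/eqP; apply: eq_bigr => j _.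
      by rewrite expr0 mulr1 horner_exp.
  - case/andP => /goppaP [hc]; rewrite sG1 => h1 h0.
    apply/goppaP; split => // s; rewrite sG2 => hs.
    case: (ltnP s i) => si.
    + case: (posnP s) => [s0|sp].
        rewrite s0 -[X in _ == X](eqP h0); apply/eqP; apply: eq_bigr => j _.
        by rewrite expr0 mulr1 horner_exp.
      have frob0 (x : F) : x ^+ t == 0 -> x == 0 by rewrite expf_eq0 => /andP [].
      apply: frob0.
      have hs' : (s * t - i < i * t.-1)%N by nia.
      rewrite frob_sum -[X in _ == X](eqP (h1 _ hs')); apply/eqP; apply: eq_bigr => j _.
      have [a0 g0] := memL j (ltn_ord j).
      by rewrite frobterm //; [nia | exact: cq].
    + have hs' : (s - i < i * t.-1)%N by nia.
      rewrite -[X in _ == X](eqP (h1 _ hs')); apply/eqP; apply: eq_bigr => j _.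
      have [a0 g0] := memL j (ltn_ord j).
      by rewrite -shift // subnK.
have rv0 n (Y : 'M[F]_(1, n)) : (Y == 0) = [forall j, Y 0 j == 0].
  apply/eqP/forallP => [-> j | h]; first by rewrite mxE.
  by apply/matrixP => r j; rewrite ord1 mxE; exact/eqP.
split => //.
move=> c; rewrite C2 /H2 tr_col_mx mul_mx_row row_mx_eq0 !rv0.
apply/idP/idP.
- case/andP => /goppaP [hc]; rewrite sG1 => h1 h0.
  apply/and3P; split; first by apply/forallP.
  + apply/forallP => j; rewrite ord1 !mxE -[X in _ == X](eqP h0); apply/eqP.
    by apply: eq_bigr => m _; rewrite !mxE.
  + apply/forallP => s; rewrite !mxE -[X in _ == X](eqP (h1 _ (ltn_ord s))).
    by apply/eqP; apply: eq_bigr => m _; rewrite !mxE mulrA horner_exp.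
- case/and3P => /forallP hc /forallP h0 /forallP h1; apply/andP; split.
  + apply/goppaP; split => // s; rewrite sG1 => hs.
    have := h1 (Ordinal hs); rewrite !mxE => /eqP e; rewrite -[X in _ == X]e; apply/eqP.
    by apply: eq_bigr => m _; rewrite !mxE mulrA horner_exp.
  + have := h0 0; rewrite !mxE => /eqP e; rewrite -[X in _ == X]e; apply/eqP.
    by apply: eq_bigr => m _; rewrite !mxE.
Qed.
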